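(* Let $M < N$ be positive integers. Define $\gamma_{N,M} : (\mathbb{R}^N \setminus \{\mathbf{0}\})^M \to \mathbb{R}^{N\times M}$ as follows: for nonzero $v^{(1)}, \dots, v^{(M)} \in \mathbb{R}^N$ let $U = \begin{bmatrix} v^{(1)}/\|v^{(1)}\|_2 & \cdots & v^{(M)}/\|v^{(M)}\|_2 \end{bmatrix} \in \mathbb{R}^{N\times M}$, let $U_1 \in \mathbb{R}^{M\times M}$ be the submatrix formed by the first $M$ rows of $U$, let $S = \tfrac12 I + \mathrm{striu}(U^\top U)$, and set $$\gamma_{N,M}(v^{(1)}, \dots, v^{(M)}) = \begin{bmatrix} I_M \\ \mathbf{0} \end{bmatrix} - U S^{-1} U_1^\top \in \mathbb{R}^{N\times M},$$ where $\begin{bmatrix} I_M \\ \mathbf{0}\end{bmatrix}\in\mathbb{R}^{N\times M}$ consists of the $M\times M$ identity on top of an $(N-M)\times M$ zero block. Then $S$ is always invertible, $\gamma_{N,M}$ takes values in the Stiefel manifold $\mathrm{St}(N,M)$, and $\gamma_{N,M}$ is surjective onto $\mathrm{St}(N,M)$.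
   Context: $\mathrm{St}(N,M) = \{\Omega \in \mathbb{R}^{N\times M} : \Omega^\top \Omega = I_M\}$. For a square matrix $X$, $\mathrm{striu}(X)$ denotes the strictly upper-triangular part of $X$ (all diagonal and below-diagonal entries set to zero). *)

(* Defs.v *)
From HB Require Import structures.
From mathcomp Require Import all_boot all_order all_algebra.
From mathcomp Require Import reals.
Set Implicit Arguments. Unset Strict Implicit. Unset Printing Implicit Defensive.
Import Order.TTheory GRing.Theory Num.Theory.
Local Open Scope ring_scope.

Definition norm2 {R : realType} {n : nat} (v : 'cV[R]_n) : R :=
  Num.sqrt (\sum_(i < n) v i 0 ^+ 2).

Definition striu {R : realType} {m : nat} (X : 'M[R]_m) : 'M[R]_m :=
  \matrix_(i, j) (if (i < j)%N then X i j else 0).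

Definition stiefel {R : realType} {n m : nat} (Om : 'M[R]_(n, m)) : Prop :=
  Om^T *m Om = 1%:M.

(* The vectors v^(1),..,v^(M) are the columns of V; N = M + K. *)
Definition normcols {R : realType} {N M : nat} (V : 'M[R]_(N, M)) : 'M[R]_(N, M) :=
  \matrix_(i, j) (V i j / norm2 (col j V)).

Definition Smat {R : realType} {N M : nat} (U : 'M[R]_(N, M)) : 'M[R]_M :=
  (2^-1) *: 1%:M + striu (U^T *m U).

Definition gammaNM {R : realType} {M K : nat} (V : 'M[R]_(M + K, M)) : 'M[R]_(M + K, M) :=
  let U := normcols V in
  col_mx 1%:M 0 - U *m invmx (Smat U) *m (usubmx U)^T.

(* Main.v *)
Require Import Defs.
From HB Require Import structures.
From mathcomp Require Import all_boot all_order all_algebra.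
From mathcomp Require Import reals.
From mathcomp Require Import ring lra.
Import Order.TTheory GRing.Theory Num.Theory.
Local Open Scope ring_scope.
Set Implicit Arguments. Unset Strict Implicit.

Lemma Smat_unit (R : realType) N m (U : 'M[R]_(N, m)) : Smat U \in unitmx.
Proof.
rewrite unitmxE -det_tr det_trig.
  rewrite (eq_bigr (fun _ => 2^-1)).
    by rewrite prodr_const unitfE expf_neq0 // invr_eq0 pnatr_eq0.
  by move=> i _; rewrite !mxE eqxx ltnn addr0 mulr1.
apply/forallP=> i; apply/forallP=> j; apply/implyP=> lij.
rewrite !mxE; have -> : (j < i)%N = false by rewrite ltnNge ltnW.
by rewrite -val_eqE /= (gtn_eqF lij) mulr0 addr0.

Qed.

Lemma gram_sym (R : realType) N m (U : 'M[R]_(N, m)) i j :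
  (U^T *m U) j i = (U^T *m U) i j.
Proof. by rewrite !mxE; apply: eq_bigr => k _; rewrite !mxE mulrC. Qed.

Lemma SmatE (R : realType) N m (U : 'M[R]_(N, m)) i j :
  Smat U i j = 2^-1 * (i == j)%:R + (if (i < j)%N then (U^T *m U) i j else 0).
Proof. by rewrite !mxE. Qed.

Lemma Smat_sym (R : realType) N m (U : 'M[R]_(N, m)) :
  (forall j, (U^T *m U) j j = 1) -> Smat U + (Smat U)^T = U^T *m U.
Proof.
move=> hU; apply/matrixP=> i j.
rewrite mxE [(Smat U)^T i j]mxE !SmatE.
case: (ltngtP i j) => hij.
- by rewrite -!val_eqE /= (ltn_eqF hij) (gtn_eqF hij) !mulr0 !add0r addr0.
- by rewrite -!val_eqE /= (ltn_eqF hij) (gtn_eqF hij) !mulr0 !add0r gram_sym.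
- have eij : i = j by apply: val_inj.
  rewrite eij eqxx !mulr1 !addr0 hU.
  by rewrite -mulr2n -[in LHS](mulr1 (2^-1)) -mulrnAr mulVf // pnatr_eq0.
Qed.

Lemma zmod_aux (V : zmodType) (o a b : V) : o - b - (a - (a + b)) = o.
Proof. by rewrite (opprD a b) addNKr opprK subrK. Qed.

Lemma zmod_aux2 (V : zmodType) (o a b c : V) : o - (a + (- b + c)) = o - c - (a - b).
Proof. by rewrite !opprD !opprK !addrA addrAC (addrAC o). Qed.

Definition Qm (R : realType) N m (U : 'M[R]_(N, m)) : 'M[R]_N :=
  1%:M - U *m invmx (Smat U) *m U^T.

Lemma Q_orth (R : realType) N m (U : 'M[R]_(N, m)) :
  (forall j, (U^T *m U) j j = 1) -> (Qm U)^T *m Qm U = 1%:M.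
Proof.
move=> hU; rewrite /Qm; set T := invmx (Smat U).
have hST : Smat U *m T = 1%:M by rewrite mulmxV // Smat_unit.
have key : T^T *m (U^T *m U) *m T = T^T + T.
  rewrite -(Smat_sym hU) mulmxDr mulmxDl -mulmxA hST mulmx1.
  by rewrite -trmx_mul hST trmx1 mul1mx.
have -> : (1%:M - U *m T *m U^T)^T = 1%:M - U *m T^T *m U^T.
  rewrite linearB /= trmx1 !trmx_mul trmxK.
congr (_ - _); exact: mulmxA.
rewrite mulmxBl mul1mx mulmxBr mulmx1.
have -> : U *m T^T *m U^T *m (U *m T *m U^T) = U *m (T^T *m (U^T *m U) *m T) *m U^T.
  by rewrite !mulmxA.
rewrite key mulmxDr mulmxDl.
by rewrite zmod_aux.
Qed.

Lemma gamma_Q (R : realType) M K (V : 'M[R]_(M + K, M)) :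
  gammaNM V = Qm (normcols V) *m col_mx 1%:M 0.
Proof.
rewrite /gammaNM /Qm; set U := normcols V.
have -> : (usubmx U)^T = U^T *m col_mx 1%:M 0.
  by rewrite -{2}(vsubmxK U) tr_col_mx mul_row_col mulmx1 mulmx0 addr0.
by rewrite mulmxBl mul1mx !mulmxA.
Qed.

Lemma stiefel_Q (R : realType) M K (Q : 'M[R]_(M + K)) :
  Q^T *m Q = 1%:M -> stiefel (Q *m col_mx 1%:M (0 : 'M_(K, M))).
Proof.
move=> hQ; rewrite /stiefel trmx_mul -mulmxA (mulmxA Q^T) hQ mul1mx.
by rewrite tr_col_mx mul_row_col mulmx1 mulmx0 addr0 trmx1.
Qed.

Lemma normcols_unit (R : realType) N m (V : 'M[R]_(N, m)) :
  (forall j, col j V != 0) -> forall j, ((normcols V)^T *m normcols V) j j = 1.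
Proof.
move=> h j.
set s := \sum_i V i j ^+ 2.
have s0 : 0 <= s by apply: sumr_ge0 => i _; exact: sqr_ge0.
have sn0 : s != 0.
  apply: contra (h j) => /eqP hs; apply/eqP/matrixP => i k.
  rewrite !mxE.
  have H : V i j ^+ 2 = 0.
    by apply: (psumr_eq0P _ hs) => // l _; exact: sqr_ge0.
  by move/eqP: H; rewrite sqrf_eq0 => /eqP.
have hn : norm2 (col j V) ^+ 2 = s.
  rewrite /norm2 sqr_sqrtr; last by apply: sumr_ge0 => i _; exact: sqr_ge0.
  by apply: eq_bigr => i _; rewrite !mxE.
rewrite mxE (eq_bigr (fun i => V i j ^+ 2 / norm2 (col j V) ^+ 2)).
  by rewrite -mulr_suml hn mulfV.
by move=> i _; rewrite !mxE -expr2 expr_div_n.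
Qed.

Lemma normcols_id (R : realType) N m (U : 'M[R]_(N, m)) :
  (forall j, (U^T *m U) j j = 1) -> normcols U = U.
Proof.
move=> hU; apply/matrixP => i j; rewrite mxE.
suff -> : norm2 (col j U) = 1 by rewrite divr1.
rewrite /norm2 -sqrtr1 -(hU j) mxE; congr Num.sqrt.
by apply: eq_bigr => k _; rewrite !mxE expr2.
Qed.

Lemma unitcol_nz (R : realType) N m (U : 'M[R]_(N, m)) :
  (forall j, (U^T *m U) j j = 1) -> forall j, col j U != 0.
Proof.
move=> hU j; apply/eqP => h; move: (hU j); rewrite mxE big1 => [/eqP|k _].
  by rewrite eq_sym oner_eq0.
 have := congr1 (fun A : 'M[R]_(N, 1) => A k 0) h; rewrite !mxE => ->.
by rewrite mulr0.
Qed.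

Lemma striu_block (R : realType) n1 n2 (A : 'M[R]_n1) B C (D : 'M[R]_n2) :
  striu (block_mx A B C D) = block_mx (striu A) B 0 (striu D).
Proof.
apply/matrixP => i j; rewrite mxE.
case: (split_ordP i) => i' ->; case: (split_ordP j) => j' ->;
  rewrite ?block_mxEul ?block_mxEur ?block_mxEdl ?block_mxEdr ?mxE //=.
- by rewrite (leq_trans (ltn_ord i') (leq_addr _ _)).
- by rewrite ltnNge (leq_trans (ltnW (ltn_ord j')) (leq_addr _ _)).
- by rewrite ltn_add2l.
Qed.

Lemma striu1 (R : realType) (A : 'M[R]_1) : striu A = 0.
Proof. by apply/matrixP => i j; rewrite !mxE (ord1 i) (ord1 j) ltnn. Qed.

Lemma Smat_row (R : realType) N m (u : 'cV[R]_N) (V : 'M[R]_(N, m)) :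
  Smat (row_mx u V) = block_mx (2^-1)%:M (u^T *m V) 0 (Smat V).
Proof.
rewrite /Smat tr_row_mx mul_col_row striu_block striu1 !scalemx1.
by rewrite (scalar_mx_block 1 m) add_block_mx !addr0 !add0r.
Qed.

Lemma invmx_eq (R : realType) n (A B : 'M[R]_n) :
  A \in unitmx -> A *m B = 1%:M -> invmx A = B.
Proof.
move=> uA hAB; rewrite -[invmx A]mulmx1 -hAB mulmxA mulVmx // mul1mx //.
Qed.

Lemma two_neq0 (R : realType) : (2 : R) != 0.
Proof. by rewrite pnatr_eq0. Qed.

Lemma invS_row (R : realType) N m (u : 'cV[R]_N) (V : 'M[R]_(N, m)) :
  invmx (Smat (row_mx u V)) =
  block_mx 2%:M (- (2 *: (u^T *m V *m invmx (Smat V)))) 0 (invmx (Smat V)).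
Proof.
apply: invmx_eq; first exact: Smat_unit.
rewrite Smat_row mulmx_block !mul_scalar_mx !mulmx0 !mul0mx !addr0 !add0r.
rewrite mulmxV ?Smat_unit // scalerN scalerA mulVf ?two_neq0 // scale1r addNr.
by rewrite scale_scalar_mx mulVf ?two_neq0 // -scalar_mx_block.
Qed.

Lemma Q_row (R : realType) N m (u : 'cV[R]_N) (V : 'M[R]_(N, m)) :
  Qm (row_mx u V) = (1%:M - 2 *: (u *m u^T)) *m Qm V.
Proof.
rewrite /Qm invS_row tr_row_mx mul_row_block mul_row_col.
rewrite !mulmx0 !addr0 mul_mx_scalar !mulmxBl !mulmxBr !mul1mx !mulmx1.
rewrite !mulmxDl !mulmxN !mulNmx -!scalemxAl -!scalemxAr -!scalemxAl !mulmxA.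
exact: zmod_aux2.
Qed.

Lemma Q_col0 (R : realType) N m (U : 'M[R]_(N, m)) :
  Qm (col_mx (0 : 'M_(1, m)) U) = block_mx 1%:M 0 0 (Qm U).
Proof.
have hS : Smat (col_mx (0 : 'M_(1, m)) U) = Smat U.
  by rewrite /Smat tr_col_mx mul_row_col mulmx0 add0r.
rewrite /Qm hS tr_col_mx mul_col_mx mul_col_row !mul0mx trmx0 !mulmx0.
rewrite (scalar_mx_block 1 N) opp_block_mx add_block_mx.
by rewrite !oppr0 !addr0.
Qed.

Lemma colE (R : realType) a b (i : 'I_(a + b)) (j : 'I_a) :
  (col_mx (1%:M : 'M[R]_a) (0 : 'M_(b, a))) i j = ((i : nat) == j)%:R.
Proof.
case: (split_ordP i) => i' ->; rewrite ?col_mxEu ?col_mxEd !mxE //=.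
by rewrite gtn_eqF // (leq_trans (ltn_ord j) (leq_addr _ _)).
Qed.

Lemma E_block (R : realType) m K :
  (col_mx (1%:M : 'M[R]_(1 + m)) (0 : 'M_(K, 1 + m)) : 'M_(1 + (m + K), 1 + m))
  = block_mx 1%:M 0 0 (col_mx 1%:M 0).
Proof.
apply/matrixP => i j; rewrite (@colE R (1 + m) K i).
case: (split_ordP i) => i' ->; case: (split_ordP j) => j' ->;
  rewrite ?block_mxEul ?block_mxEur ?block_mxEdl ?block_mxEdr ?colE ?mxE /=.
- by rewrite (ord1 i') (ord1 j').
- by rewrite (ord1 i').
- by rewrite (ord1 j').
- by rewrite eqn_add2l.
Qed.

Lemma tr11 (R : realType) (A : 'M[R]_1) : A^T = A.
Proof. by rewrite [A]mx11_scalar tr_scalar_mx. Qed.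

Lemma sqnorm_pos (R : realType) n (x : 'cV[R]_n) : x != 0 -> 0 < (x^T *m x) 0 0.
Proof.
move=> hx; have e : (x^T *m x) 0 0 = \sum_i x i 0 ^+ 2.
  by rewrite mxE; apply: eq_bigr => i _; rewrite !mxE expr2.
rewrite e lt_def sumr_ge0 ?andbT; last by move=> i _; exact: sqr_ge0.
apply: contra hx => /eqP hs; apply/eqP/matrixP => i k; rewrite (ord1 k) !mxE.
have H : x i 0 ^+ 2 = 0.
  by apply: (psumr_eq0P _ hs) => // l _; exact: sqr_ge0.
by move/eqP: H; rewrite sqrf_eq0 => /eqP.
Qed.

Lemma reflect_exists (R : realType) N (hN : (0 < N)%N) (w : 'cV[R]_(1 + N)) :
  w^T *m w = 1%:M ->
  exists u : 'cV[R]_(1 + N), u^T *m u = 1%:M /\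
    (1%:M - 2 *: (u *m u^T)) *m w = col_mx 1%:M 0.
Proof.
move=> ww; set e1 : 'cV[R]_(1 + N) := col_mx 1%:M 0.
have ee : e1^T *m e1 = 1%:M.
  by rewrite /e1 tr_col_mx mul_row_col mulmx0 addr0 trmx1 mulmx1.
have [we | wne] := eqVneq w e1.
  pose d : 'cV[R]_N := delta_mx (Ordinal hN) 0.
  exists (col_mx 0 d); split.
    rewrite tr_col_mx mul_row_col mulmx0 add0r /d trmx_delta mul_delta_mx.
    by apply/matrixP => i j; rewrite (ord1 i) (ord1 j) !mxE.
  rewrite we mulmxBl mul1mx -scalemxAl -mulmxA /e1 tr_col_mx mul_row_col.
  by rewrite trmx0 mul0mx mulmx0 add0r mulmx0 scaler0 subr0.
pose d := w - e1.
have dne : d != 0 by rewrite /d subr_eq0.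
set P := e1^T *m w.
have wtE : w^T *m e1 = P by rewrite -[LHS]tr11 trmx_mul trmxK.
have dw : d^T *m w = 1%:M - P by rewrite /d linearB /= mulmxBl ww.
have dd : d^T *m d = d^T *m w + d^T *m w.
  rewrite dw {2}/d mulmxBr dw /d linearB /= mulmxBl wtE ee.
  by rewrite opprB.
set c := (d^T *m w) 0 0.
have spos := sqnorm_pos dne.
have sE : (d^T *m d) 0 0 = c + c by rewrite dd mxE.
set s := (d^T *m d) 0 0 in spos sE.
pose a := (Num.sqrt s)^-1.
have aa : a * a = s^-1.
  by rewrite /a -expr2 exprVn sqr_sqrtr // ltW.
have tZ : (a *: d)^T = a *: d^T by apply/matrixP=> i j; rewrite !mxE.
exists (a *: d); split.
  rewrite tZ -scalemxAl -scalemxAr scalerA aa [d^T *m d]mx11_scalar.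
  by rewrite scale_scalar_mx mulVf // gt_eqF.
rewrite mulmxBl mul1mx tZ -scalemxAr -!scalemxAl !scalerA -mulmxA.
rewrite [d^T *m w]mx11_scalar mul_mx_scalar !scalerA -/c.
have cn0 : c != 0 by apply: contraTneq spos => c0; rewrite sE c0 addr0 ltxx.
have -> : 2 * a * a * c = 1.
  rewrite -(mulrA 2 a a) aa sE; field.
  by rewrite -mulr2n mulrn_eq0 cn0.
by rewrite scale1r /d opprB addrC subrK.
Qed.

Lemma trZ (R : realType) m n k (X : 'M[R]_(m, n)) : (k *: X)^T = k *: X^T.
Proof. by apply/matrixP=> i j; rewrite !mxE. Qed.

Lemma lmod_aux (R : realType) n (o X : 'M[R]_n) :
  o - 2 *: X - (2 *: X - 2 *: (2 *: X)) = o.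
Proof.
rewrite scalerA -scalerBl -addrA -opprD -scalerDl.
have -> : (2 + (2 - 2 * 2) : R) = 0 by ring.
by rewrite scale0r subr0.
Qed.

Lemma H_inv (R : realType) N (u : 'cV[R]_N) :
  u^T *m u = 1%:M ->
  (1%:M - 2 *: (u *m u^T))^T = 1%:M - 2 *: (u *m u^T) /\
  (1%:M - 2 *: (u *m u^T)) *m (1%:M - 2 *: (u *m u^T)) = 1%:M.
Proof.
move=> hu; split.
  by rewrite linearB /= trmx1 trZ trmx_mul trmxK.
rewrite mulmxBl mul1mx mulmxBr mulmx1 -scalemxAl -scalemxAr.
have -> : u *m u^T *m (u *m u^T) = u *m u^T by rewrite mulmxA -(mulmxA u) hu mulmx1.
exact: lmod_aux.
Qed.

Lemma step_exists (R : realType) N m (hN : (0 < N)%N) (Om : 'M[R]_(1 + N, 1 + m)) :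
  Om^T *m Om = 1%:M ->
  exists u : 'cV[R]_(1 + N), u^T *m u = 1%:M /\
  exists D : 'M[R]_(N, m), D^T *m D = 1%:M /\
    Om = (1%:M - 2 *: (u *m u^T)) *m block_mx 1%:M 0 0 D.
Proof.
move=> hO.
have ww : (lsubmx Om)^T *m lsubmx Om = 1%:M.
  move: hO; rewrite -{1 2}(hsubmxK Om) tr_row_mx mul_col_row (scalar_mx_block 1 m).
  by case/eq_block_mx.
have [u [hu hH]] := reflect_exists hN ww.
exists u; split => //.
have [Ht HH] := H_inv hu.
set H := 1%:M - 2 *: (u *m u^T) in Ht HH hH *.
set A := H *m Om.
have hA : A^T *m A = 1%:M.
  by rewrite /A trmx_mul Ht mulmxA -(mulmxA Om^T) HH mulmx1.
have hl : lsubmx A = col_mx 1%:M 0 by rewrite /A -mulmx_lsub.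
have ul : ulsubmx A = 1%:M.
  by rewrite -[RHS](col_mxKu _ (0 : 'M_(N, 1))) -hl; apply/matrixP=> i j; rewrite !mxE.
have dl : dlsubmx A = 0.
  by rewrite -[RHS](col_mxKd (1%:M : 'M_1)) -hl; apply/matrixP=> i j; rewrite !mxE.
move: hA; rewrite -(submxK A) ul dl tr_block_mx mulmx_block (scalar_mx_block 1 m).
case/eq_block_mx => _ e2 _ e4.
move: e2; rewrite trmx1 mul1mx trmx0 mul0mx addr0 => B0.
exists (drsubmx A); split.
  by move: e4; rewrite B0 trmx0 mul0mx add0r.
by rewrite -B0 -ul -dl submxK /A mulmxA HH mul1mx.
Qed.

Lemma diag_row (R : realType) N m (u : 'cV[R]_(1 + N)) (U' : 'M[R]_(N, m)) :
  u^T *m u = 1%:M -> (forall j, (U'^T *m U') j j = 1) ->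
  forall j, ((row_mx u (col_mx 0 U'))^T *m row_mx u (col_mx 0 U')) j j = 1.
Proof.
move=> hu hU' j; rewrite tr_row_mx mul_col_row tr_col_mx mul_row_col trmx0 mul0mx add0r.
case: (split_ordP j) => j' ->.
  by rewrite block_mxEul hu (ord1 j') mxE.
by rewrite block_mxEdr hU'.
Qed.

Lemma Q_step (R : realType) m K (u : 'cV[R]_(1 + (m + K))) (U' : 'M[R]_(m + K, m)) D :
  Qm U' *m col_mx 1%:M 0 = D ->
  (Qm (row_mx u (col_mx 0 U')) *m col_mx (1%:M : 'M_(1 + m)) (0 : 'M_(K, 1 + m))
     : 'M_(1 + (m + K), 1 + m))
  = (1%:M - 2 *: (u *m u^T)) *m block_mx 1%:M 0 0 D.
Proof.
move=> hQ; rewrite Q_row Q_col0 E_block -mulmxA mulmx_block.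
by rewrite !mulmx1 !mulmx0 !mul0mx !addr0 !add0r hQ.
Qed.

Lemma surj_aux (R : realType) K (hK : (0 < K)%N) m :
  forall Om : 'M[R]_(m + K, m), Om^T *m Om = 1%:M ->
  exists U : 'M[R]_(m + K, m), (forall j, (U^T *m U) j j = 1) /\ Qm U *m col_mx 1%:M 0 = Om.
Proof.
elim: m => [|m IH] Om hO.
  exists 0; split; first by case.
  by apply/matrixP => i [].
have hN : (0 < m + K)%N by rewrite addn_gt0 hK orbT.
have [u [hu [D [hD eO]]]] := @step_exists R (m + K) m hN Om hO.
have [U' [hU' hQ]] := IH D hD.
exists (row_mx u (col_mx 0 U')); split.
  exact: diag_row.
rewrite eO; exact: Q_step.
Qed.

Theorem theorem3 (R : realType) (M K : nat) (hM : (0 < M)%N) (hK : (0 < K)%N) :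
  (forall V : 'M[R]_(M + K, M), (forall j : 'I_M, col j V != 0) ->
     Smat (normcols V) \in unitmx /\ stiefel (gammaNM V)) /\
  (forall Om : 'M[R]_(M + K, M), stiefel Om ->
     exists V : 'M[R]_(M + K, M), (forall j : 'I_M, col j V != 0) /\ gammaNM V = Om).
Proof.
split.
  move=> V hV; split; first exact: Smat_unit.
  rewrite gamma_Q; apply: stiefel_Q; exact: Q_orth (normcols_unit hV).
move=> Om hO; have [U [hU hQ]] := surj_aux hK hO.
exists U; split; first exact: unitcol_nz.
by rewrite gamma_Q normcols_id.
Qed.
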